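(* Let $k\ge 1$ and $n\ge 3$, and let $c$ be a connected $k$-colouring of the edges of $K_n$ whose vertices are $v_1,\dots,v_n$, with the following properties: (i) exactly $l$ distinct $3$-sets of colours occur as colour sets of multicoloured triangles; (ii) exactly $k-2$ of these $3$-sets contain colour $k$; (iii) the edges of colour $k$ are exactly the edges of the cycle $v_1v_2\cdots v_nv_1$; (iv) all edges $v_iv_{i+2}$, $i\in[n]$, have the same colour (indices taken mod $n$). Then there is a connected $(k+1)$-colouring $c'$ of the edges of $K_{2n}$, whose vertices can be labelled $v'_1,\dots,v'_{2n}$, with the following properties: (i') exactly $l+k-1$ distinct $3$-sets of colours occur as colour sets of multicoloured triangles; (ii') exactly $k-1$ of these $3$-sets contain colour $k+1$; (iii') the edges of colour $k+1$ form a cycle; (iv') all edges $v'_iv'_{i+2}$, $i\in[2n]$, have the same colour (indices taken mod $2n$).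
   Context: A $k$-colouring of the edges of the complete graph $K_n$ (colours from $\{1,\dots,k\}$) is called connected if for each colour $i$ the edges of colour $i$ form a connected spanning subgraph of $K_n$. A triangle is multicoloured if its three edges have three distinct colours; its colour set is the set of these three colours. *)

(* Defs.v *)
From mathcomp Require Import all_boot.
Set Implicit Arguments. Unset Strict Implicit. Unset Printing Implicit Defensive.

(* Colour j (1-indexed, as in the paper) is the ordinal with value j-1.
   A colouring is a function c : 'I_m -> 'I_m -> 'I_k; only its values on
   pairs of distinct vertices matter, and it must be symmetric. *)
Definition colouring (m k : nat) := 'I_m -> 'I_m -> 'I_k.

Definition sym_col m k (c : colouring m k) : Prop := forall x y, c x y = c y x.

Definition connected_col m k (c : colouring m k) : Prop :=
  forall (i : 'I_k) (x y : 'I_m), connect (fun a b => (a != b) && (c a b == i)) x y.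

Definition tri_sets m k (c : colouring m k) : {set {set 'I_k}} :=
  [set S : {set 'I_k} | [exists x : 'I_m, exists y : 'I_m, exists z : 'I_m,
     [&& x != y, y != z, x != z,
         c x y != c y z, c y z != c x z, c x y != c x z &
         S == [set c x y; c y z; c x z]]]].

Definition has_colour k (S : {set 'I_k}) (j : nat) : bool :=
  [exists a in S, val a == j.-1].

Definition n_tri_with m k (c : colouring m k) (j : nat) : nat :=
  #|[set S in tri_sets c | has_colour S j]|.

(* adjacency in the cycle v_1 v_2 ... v_m v_1 (vertex v_i is ordinal i-1) *)
Definition cyc_adj m (x y : 'I_m) : bool :=
  (val y == (val x).+1 %% m) || (val x == (val y).+1 %% m).

Definition colour_is_cycle m k (c : colouring m k) (j : nat) : Prop :=
  exists s : seq 'I_m, [/\ uniq s, 3 <= size s &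
    forall x y : 'I_m, x != y ->
      (val (c x y) == j.-1) =
      [&& x \in s, y \in s & (next s x == y) || (next s y == x)]].

Definition dist2_const m k (c : colouring m k) : Prop :=
  exists col : 'I_k, forall x y : 'I_m, val y = ((val x).+2 %% m) -> c x y = col.

(* Main.v *)
Require Import Defs.
From mathcomp Require Import all_boot zify.
Set Implicit Arguments. Unset Strict Implicit. Unset Printing Implicit Defensive.

Lemma modS_case m a : a < m -> a.+1 %% m = if a.+1 < m then a.+1 else 0.
Proof.
move=> am; case: ifP => h; first by rewrite modn_small.
have -> : a.+1 = m by lia.
by rewrite modnn.
Qed.

Lemma cycP m (x y : 'I_m) : 1 < m -> cyc_adj x y <->
  ((y:nat) = x + 1 \/ (x:nat) = y + 1 \/ ((x:nat) = m - 1 /\ (y:nat) = 0)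
   \/ ((y:nat) = m - 1 /\ (x:nat) = 0)).
Proof.
move=> m1; rewrite /cyc_adj /= !modS_case ?ltn_ord //.
have := ltn_ord x; have := ltn_ord y.
case: (ltnP x.+1 m); case: (ltnP y.+1 m) => h1 h2 hy hx; split => [/orP[/eqP|/eqP]|H]; try lia;
  apply/orP; first [left; apply/eqP; lia | right; apply/eqP; lia].
Qed.

Lemma cyc_neq m (x y : 'I_m) : 1 < m -> cyc_adj x y -> x != y.
Proof.
move=> m1 /(cycP _ _ m1) H; apply/negP => /eqP xy; subst; lia.
Qed.

Definition pi N (x : 'I_(2 * N.+1)) : 'I_N.+1 := Ordinal (ltn_pmod x (ltn0Sn N)).

Lemma lift_subproof N (b : bool) (p : 'I_N.+1) : p + (if b then N.+1 else 0) < 2 * N.+1.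
Proof. have := ltn_ord p; case: b => /=; lia. Qed.

Definition lift N b (p : 'I_N.+1) : 'I_(2 * N.+1) := Ordinal (lift_subproof b p).

Lemma piE N (x : 'I_(2 * N.+1)) : nat_of_ord (pi x) = if x < N.+1 then nat_of_ord x else x - N.+1.
Proof.
rewrite /=; case: ifP => h; first by rewrite modn_small.
have hx := ltn_ord x.
have -> : nat_of_ord x = (x - N.+1) + N.+1 by lia.
rewrite modnDr modn_small; lia.
Qed.

Lemma pi_lift N b (p : 'I_N.+1) : pi (lift b p) = p.
Proof. apply: ord_inj; rewrite piE /=; have := ltn_ord p; case: b; case: ifP; lia. Qed.

Lemma lift_pi N (x : 'I_(2 * N.+1)) : exists b, x = lift b (pi x).
Proof.
exists (N.+1 <= x); apply: ord_inj; have E := piE x; simpl in E; rewrite /= E.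
have := ltn_ord x; case: ifP; case: ifP; lia.
Qed.

Lemma liftE N b (p : 'I_N.+1) : (lift b p : nat) = p + (if b then N.+1 else 0).
Proof. by []. Qed.

Lemma cyc_pi N (x y : 'I_(2 * N.+1)) : 1 < N -> cyc_adj x y -> cyc_adj (pi x) (pi y).
Proof.
move=> N1; case: (lift_pi x) => b ->; case: (lift_pi y) => b' ->.
rewrite !pi_lift !cycP ?liftE; try lia.
have := ltn_ord (pi x); have := ltn_ord (pi y); case: b; case: b'; lia.
Qed.

Lemma liftN N b b' (p q : 'I_N.+1) : 1 < N -> ~~ cyc_adj p q -> ~~ cyc_adj (lift b p) (lift b' q).
Proof.
move=> N1 h; apply/negP => /(cyc_pi N1); rewrite !pi_lift; exact/negP.
Qed.

Lemma liftA N b (p q : 'I_N.+1) : 1 < N -> exists b', ~~ cyc_adj (lift b p) (lift b' q).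
Proof.
move=> N1; case h: (cyc_adj (lift b p) (lift false q)); last by exists false; rewrite h.
exists true; apply/negP; have m1 : 1 < 2 * N.+1 by lia.
move/(cycP _ _ m1): h; rewrite (cycP _ _ m1) !liftE.
have := ltn_ord p; have := ltn_ord q; case: b => /=; lia.
Qed.

Lemma liftB N b (p q : 'I_N.+1) : 1 < N -> cyc_adj p q -> exists b', cyc_adj (lift b p) (lift b' q).
Proof.
move=> N1 h; case h': (cyc_adj (lift b p) (lift false q)); first by exists false; rewrite h'.
exists true; have m1 : 1 < 2 * N.+1 by lia. have m0 : 1 < N.+1 by lia.
move/negbT/negP: h'; rewrite (cycP _ _ m1) => h'; move: h'; move/(cycP _ _ m0): h; rewrite (cycP _ _ m1) !liftE.
have := ltn_ord p; have := ltn_ord q; case: b => /=; lia.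
Qed.

Lemma triP m k (c : colouring m k) S : S \in tri_sets c <->
  exists x y z, [/\ x != y, y != z, x != z,
    [/\ c x y != c y z, c y z != c x z & c x y != c x z] &
    S = [set c x y; c y z; c x z]].
Proof.
rewrite inE; split.
  move=> /existsP[x /existsP[y /existsP[z]]].
  move=> /andP[h1 /andP[h2 /andP[h3 /andP[h4 /andP[h5 /andP[h6 /eqP h7]]]]]].
  by exists x, y, z; split.
move=> [x [y [z [h1 h2 h3 [h4 h5 h6] h7]]]].
apply/existsP; exists x; apply/existsP; exists y; apply/existsP; exists z.
by rewrite h1 h2 h3 h4 h5 h6 h7 eqxx.
Qed.

Definition ew K (j : 'I_K.+2) : 'I_K.+3 := widen_ord (leqnSn _) j.
Definition hw K (j : 'I_K.+2) : 'I_K.+3 := if j == ord_max then ord_max else ew j.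
Definition cc N K (c : colouring N.+1 K.+2) : colouring (2 * N.+1) K.+3 :=
  fun x y => if cyc_adj x y then ord_max
             else if pi x == pi y then ew ord_max else ew (c (pi x) (pi y)).

Lemma ew_inj K : injective (@ew K).
Proof. by move=> a b /(congr1 val) /= /val_inj. Qed.

Lemma ew_max K (j : 'I_K.+2) : (ew j == ord_max) = false.
Proof. apply/negbTE; rewrite -val_eqE /= neq_ltn (ltn_ord j); done. Qed.

Lemma hw_inj K : injective (@hw K).
Proof.
move=> a b; rewrite /hw; case: eqP => [->|ha]; case: eqP => [->|hb] //.
- by move=> /esym /eqP; rewrite ew_max.
- by move=> /eqP; rewrite ew_max.
- exact: ew_inj.
Qed.

Lemma topE N K (c : colouring N.+1 K.+2)
  (hc : forall p q : 'I_N.+1, p != q -> (val (c p q) == K.+1) = cyc_adj p q)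
  p q : p != q -> (c p q == ord_max) = cyc_adj p q.
Proof. by move=> pq; rewrite -hc // -val_eqE. Qed.

Lemma lift_neq N b b' (x y : 'I_N.+1) : x != y -> lift b x != lift b' y.
Proof. by move=> xy; apply/contra: xy => /eqP /(congr1 (@pi N)); rewrite !pi_lift => ->. Qed.

Lemma C2 N K (c : colouring N.+1 K.+2) b b' (x y : 'I_N.+1) :
  x != y -> ~~ cyc_adj (lift b x) (lift b' y) -> cc c (lift b x) (lift b' y) = ew (c x y).
Proof. by move=> xy h; rewrite /cc (negbTE h) !pi_lift (negbTE xy). Qed.

Lemma C3 N K (c : colouring N.+1 K.+2)
  (hc : forall p q : 'I_N.+1, p != q -> (val (c p q) == K.+1) = cyc_adj p q)
  b b' (x y : 'I_N.+1) :
  x != y -> cyc_adj (lift b x) (lift b' y) = cyc_adj x y ->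
  cc c (lift b x) (lift b' y) = hw (c x y).
Proof.
move=> xy h; rewrite /cc h !pi_lift (negbTE xy) /hw (topE hc xy).
by case: (cyc_adj x y).
Qed.

Lemma liftEq N b b' (p q : 'I_N.+1) : 1 < N -> ~~ cyc_adj p q ->
  cyc_adj (lift b p) (lift b' q) = cyc_adj p q.
Proof. by move=> N1 h; rewrite (negbTE h) (negbTE (liftN b b' N1 h)). Qed.

Lemma atmost1 N K (c : colouring N.+1 K.+2)
  (hc : forall p q : 'I_N.+1, p != q -> (val (c p q) == K.+1) = cyc_adj p q)
  (x y z : 'I_N.+1) : x != y -> y != z -> x != z ->
  c x y != c y z -> c y z != c x z -> c x y != c x z ->
  [/\ ~~ (cyc_adj x y && cyc_adj y z), ~~ (cyc_adj x y && cyc_adj x z)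
    & ~~ (cyc_adj x z && cyc_adj y z)].
Proof.
move=> xy yz xz h1 h2 h3; have t := topE hc.
split; apply/negP => /andP[].
- rewrite -(t _ _ xy) -(t _ _ yz) => /eqP e1 /eqP e2; by move: h1; rewrite e1 e2 eqxx.
- rewrite -(t _ _ xy) -(t _ _ xz) => /eqP e1 /eqP e2; by move: h3; rewrite e1 e2 eqxx.
- rewrite -(t _ _ xz) -(t _ _ yz) => /eqP e1 /eqP e2; by move: h2; rewrite e1 e2 eqxx.
Qed.

Lemma L3 N K (c : colouring N.+1 K.+2)
  (hc : forall p q : 'I_N.+1, p != q -> (val (c p q) == K.+1) = cyc_adj p q)
  (x y z : 'I_N.+1) : 1 < N -> x != y -> y != z -> x != z ->
  c x y != c y z -> c y z != c x z -> c x y != c x z ->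
  exists b1 b2 b3, [/\ ~~ cyc_adj (lift b1 x) (lift b2 y),
     ~~ cyc_adj (lift b2 y) (lift b3 z) & ~~ cyc_adj (lift b1 x) (lift b3 z)].
Proof.
move=> N1 xy yz xz h1 h2 h3.
have [A1 A2 A3] := atmost1 hc xy yz xz h1 h2 h3.
case Hxy: (cyc_adj x y).
  move: A1 A2; rewrite Hxy /= => nyz nxz.
  have [b2 hb2] := liftA false x y N1.
  by exists false, b2, false; split => //; apply: liftN.
case Hxz: (cyc_adj x z).
  move: A3; rewrite Hxz /= => nyz.
  have [b3 hb3] := liftA false x z N1.
  by exists false, false, b3; split => //; apply: liftN; rewrite ?Hxy.
have [b3 hb3] := liftA false y z N1.
by exists false, false, b3; split => //; apply: liftN; rewrite ?Hxy ?Hxz.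
Qed.

Lemma L4 N K (c : colouring N.+1 K.+2)
  (hc : forall p q : 'I_N.+1, p != q -> (val (c p q) == K.+1) = cyc_adj p q)
  (x y z : 'I_N.+1) : 1 < N -> x != y -> y != z -> x != z ->
  c x y != c y z -> c y z != c x z -> c x y != c x z ->
  exists b1 b2 b3, [/\ cyc_adj (lift b1 x) (lift b2 y) = cyc_adj x y,
     cyc_adj (lift b2 y) (lift b3 z) = cyc_adj y z &
     cyc_adj (lift b1 x) (lift b3 z) = cyc_adj x z].
Proof.
move=> N1 xy yz xz h1 h2 h3.
have [A1 A2 A3] := atmost1 hc xy yz xz h1 h2 h3.
case Hxy: (cyc_adj x y).
  move: A1 A2; rewrite Hxy /= => nyz nxz.
  have [b2 hb2] := liftB false N1 Hxy.
  by exists false, b2, false; split; rewrite ?hb2 // liftEq.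
case Hxz: (cyc_adj x z).
  move: A3; rewrite Hxz /= => nyz.
  have [b3 hb3] := liftB false N1 Hxz.
  by exists false, false, b3; split; rewrite ?hb3 // liftEq ?Hxy.
case Hyz: (cyc_adj y z).
  have [b3 hb3] := liftB false N1 Hyz.
  by exists false, false, b3; split; rewrite ?hb3 // liftEq ?Hxy ?Hxz.
by exists false, false, false; split; rewrite liftEq ?Hxy ?Hxz ?Hyz.
Qed.

Lemma memA N K (c : colouring N.+1 K.+2)
  (hc : forall p q : 'I_N.+1, p != q -> (val (c p q) == K.+1) = cyc_adj p q)
  T : 1 < N -> T \in tri_sets c -> [set ew j | j in T] \in tri_sets (cc c).
Proof.
move=> N1 /triP [x [y [z [xy yz xz [h1 h2 h3] ->]]]].
have [b1 [b2 [b3 [n1 n2 n3]]]] := L3 hc N1 xy yz xz h1 h2 h3.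
apply/triP; exists (lift b1 x), (lift b2 y), (lift b3 z).
rewrite !C2 //; split; try exact: lift_neq.
  by rewrite !(inj_eq (@ew_inj K)).
by rewrite !(imsetU1, imsetU, imset_set1).
Qed.

Lemma memB N K (c : colouring N.+1 K.+2)
  (hc : forall p q : 'I_N.+1, p != q -> (val (c p q) == K.+1) = cyc_adj p q)
  T : 1 < N -> T \in tri_sets c -> [set hw j | j in T] \in tri_sets (cc c).
Proof.
move=> N1 /triP [x [y [z [xy yz xz [h1 h2 h3] ->]]]].
have [b1 [b2 [b3 [n1 n2 n3]]]] := L4 hc N1 xy yz xz h1 h2 h3.
apply/triP; exists (lift b1 x), (lift b2 y), (lift b3 z).
rewrite !(C3 hc) //; split; try exact: lift_neq.
  by rewrite !(inj_eq (@hw_inj K)).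
by rewrite !(imsetU1, imsetU, imset_set1).
Qed.

Definition Dset K (col : 'I_K.+2) : {set 'I_K.+3} := [set ord_max; ew ord_max; ew col].

Lemma memD N K (c : colouring N.+1 K.+2)
  (hc : forall p q : 'I_N.+1, p != q -> (val (c p q) == K.+1) = cyc_adj p q)
  col : 2 < N -> (forall x y : 'I_N.+1, val y = ((val x).+2 %% N.+1) -> c x y = col) ->
  Dset col \in tri_sets (cc c).
Proof.
move=> N2 hcol.
have l1 : 1 < N.+1 by lia. have l2 : 2 < N.+1 by lia.
have m1 : 1 < 2 * N.+1 by lia.
pose o0 : 'I_N.+1 := ord0. pose o1 : 'I_N.+1 := Ordinal l1. pose o2 : 'I_N.+1 := Ordinal l2.
have n01 : o0 != o1 by []. have n12 : o1 != o2 by []. have n02 : o0 != o2 by [].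
have e01 : cc c (lift false o0) (lift false o1) = ord_max.
  by rewrite /cc ifT // cycP //= ; lia.
have e12 : cc c (lift false o1) (lift true o2) = ew ord_max.
  rewrite C2 //; last by apply/negP; rewrite cycP //= ?liftE /=; lia.
  congr ew; apply/eqP; rewrite (topE hc) // cycP //=; lia.
have c02 : c o0 o2 = col by apply: hcol; rewrite /= modn_small.
have e02 : cc c (lift false o0) (lift true o2) = ew col.
  rewrite C2 ?c02 //; apply/negP; rewrite cycP //= ?liftE /=; lia.
have colm : col != ord_max.
  rewrite -c02 (topE hc) //; apply/negP; rewrite cycP //=; lia.
apply/triP; exists (lift false o0), (lift false o1), (lift true o2).
rewrite e01 e12 e02; split; try exact: lift_neq.
  by rewrite eq_sym ew_max (inj_eq (@ew_inj K)) eq_sym colm eq_sym ew_max.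
by [].
Qed.

Lemma set3_12 (T : finType) (a b d : T) : [set a; b; d] = [set b; a; d].
Proof. by apply/setP => u; rewrite !inE; case: (u == a); case: (u == b); case: (u == d). Qed.
Lemma set3_23 (T : finType) (a b d : T) : [set a; b; d] = [set a; d; b].
Proof. by apply/setP => u; rewrite !inE; case: (u == a); case: (u == b); case: (u == d). Qed.

Lemma cyc_sym m (x y : 'I_m) : cyc_adj x y = cyc_adj y x.
Proof. by rewrite /cyc_adj orbC. Qed.

Lemma cc_sym N K (c : colouring N.+1 K.+2) : sym_col c -> sym_col (cc c).
Proof.
move=> hs x y; by rewrite /cc (cyc_sym x y) (eq_sym (pi x)) hs.
Qed.


Lemma cyc_pi_neq N (x y : 'I_(2 * N.+1)) : 1 < N -> cyc_adj x y -> pi x != pi y.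
Proof. move=> N1 /(cyc_pi N1); apply: cyc_neq; lia. Qed.

Lemma PD N K (c : colouring N.+1 K.+2)
  (hc : forall p q : 'I_N.+1, p != q -> (val (c p q) == K.+1) = cyc_adj p q)
  (x y z : 'I_(2 * N.+1)) : 1 < N ->
  cc c x y != cc c y z -> cc c y z != cc c x z -> cc c x y != cc c x z -> pi x != pi y.
Proof.
move=> N1 h1 h2 h3; apply/negP => /eqP e.
have nxy : cyc_adj x y = false.
  by apply/negP => /(cyc_pi_neq N1); rewrite e eqxx.
move: h1 h2 h3; rewrite /cc nxy e eqxx.
case Hxz: (cyc_adj x z); case Hyz: (cyc_adj y z) => /=; rewrite ?eqxx ?andbF //.
- have := cyc_pi_neq N1 Hxz; have := cyc_pi N1 Hxz; rewrite e => cp np.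
  by rewrite (negbTE np); move/eqP: ((topE hc np)); rewrite cp => ->; rewrite eqxx.
- have := cyc_pi_neq N1 Hyz; have := cyc_pi N1 Hyz => cp np.
  by rewrite (negbTE np); move/eqP: ((topE hc np)); rewrite cp => ->; rewrite eqxx.
Qed.

Lemma mod2_case m a : 1 < m -> a < m -> a.+2 %% m = if a.+2 < m then a.+2 else a.+2 - m.
Proof.
move=> m1 am; case: ifP => h; first by rewrite modn_small.
have -> : a.+2 = (a.+2 - m) + m by lia.
rewrite modnDr modn_small; lia.
Qed.

Lemma dist2c N K (c : colouring N.+1 K.+2) (hs : sym_col c) col
  (hcol : forall x y : 'I_N.+1, val y = ((val x).+2 %% N.+1) -> c x y = col)
  (p q r : 'I_N.+1) : 1 < N -> p != r -> cyc_adj p q -> cyc_adj q r -> c p r = col.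
Proof.
move=> N1 pr; have m1 : 1 < N.+1 by lia.
have pr' : nat_of_ord p <> nat_of_ord r by move=> e; move/eqP: pr; apply; apply: ord_inj.
rewrite !cycP // => h1 h2.
have : nat_of_ord r = (nat_of_ord p).+2 %% N.+1 \/ nat_of_ord p = (nat_of_ord r).+2 %% N.+1.
  rewrite !mod2_case ?ltn_ord //; have := ltn_ord p; have := ltn_ord r; have := ltn_ord q.
  case: ifP; case: ifP; lia.
by case=> h; [apply: hcol | rewrite hs; apply: hcol].
Qed.

Lemma hw_ew K (j : 'I_K.+2) : j != ord_max -> hw j = ew j.
Proof. by rewrite /hw => /negbTE ->. Qed.
Lemma hw_max K : hw (ord_max : 'I_K.+2) = ord_max.
Proof. by rewrite /hw eqxx. Qed.

Definition GoalS N K (c : colouring N.+1 K.+2) col (S : {set 'I_K.+3}) :=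
  (exists2 T, T \in tri_sets c & S = [set ew j | j in T]) \/
  (exists2 T, T \in tri_sets c & S = [set hw j | j in T]) \/ S = Dset col.

Lemma Qlem N K (c : colouring N.+1 K.+2)
  (hc : forall p q : 'I_N.+1, p != q -> (val (c p q) == K.+1) = cyc_adj p q)
  (hs : sym_col c) col
  (hcol : forall x y : 'I_N.+1, val y = ((val x).+2 %% N.+1) -> c x y = col)
  (p q r : 'I_N.+1) b1 b2 b3 : 1 < N -> p != q -> q != r -> p != r ->
  cc c (lift b1 p) (lift b2 q) != cc c (lift b2 q) (lift b3 r) ->
  cc c (lift b2 q) (lift b3 r) != cc c (lift b1 p) (lift b3 r) ->
  cc c (lift b1 p) (lift b2 q) != cc c (lift b1 p) (lift b3 r) ->
  ~~ cyc_adj (lift b1 p) (lift b3 r) -> ~~ cyc_adj (lift b2 q) (lift b3 r) ->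
  GoalS c col [set cc c (lift b1 p) (lift b2 q); cc c (lift b2 q) (lift b3 r);
                   cc c (lift b1 p) (lift b3 r)].
Proof.
move=> N1 pq qr pr h1 h2 h3 nxz nyz.
move: h1 h2 h3; rewrite (C2 _ pr nxz) (C2 _ qr nyz) => h1 h2 h3.
have t := topE hc.
case Hxy: (cyc_adj (lift b1 p) (lift b2 q)).
- have cpq : cyc_adj p q by move: (cyc_pi N1 Hxy); rewrite !pi_lift.
  have exy : cc c (lift b1 p) (lift b2 q) = ord_max by rewrite /cc Hxy.
  move: h1 h2 h3; rewrite exy => h1 h2 h3.
  case Hqr: (cyc_adj q r).
    right; right.
    have -> : c p r = col by apply: (dist2c hs hcol N1 pr cpq Hqr).
    by have /eqP -> : c q r == ord_max by rewrite t.
  case Hpr: (cyc_adj p r).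
    right; right.
    have -> : c q r = col.
      by apply: (dist2c hs hcol N1 qr _ Hpr); rewrite cyc_sym.
    have /eqP -> : c p r == ord_max by rewrite t.
    by rewrite /Dset set3_23.
  right; left; exists [set c p q; c q r; c p r].
    apply/triP; exists p, q, r; split => //; split.
    + have /eqP -> : c p q == ord_max by rewrite t.
      by rewrite eq_sym t ?Hqr.
    + by rewrite -(inj_eq (@ew_inj K)).
    + have /eqP -> : c p q == ord_max by rewrite t.
      by rewrite eq_sym t ?Hpr.
  rewrite !(imsetU1, imsetU, imset_set1).
  have /eqP -> : c p q == ord_max by rewrite t.
  by rewrite hw_max !hw_ew // t ?Hqr ?Hpr.
- rewrite (C2 _ pq) ?Hxy // in h1 h3 *.
  left; exists [set c p q; c q r; c p r].
    apply/triP; exists p, q, r; split => //; split; by rewrite -(inj_eq (@ew_inj K)).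
  by rewrite !(imsetU1, imsetU, imset_set1).
Qed.

Lemma Qlem' N K (c : colouring N.+1 K.+2)
  (hc : forall p q : 'I_N.+1, p != q -> (val (c p q) == K.+1) = cyc_adj p q)
  (hs : sym_col c) col
  (hcol : forall x y : 'I_N.+1, val y = ((val x).+2 %% N.+1) -> c x y = col)
  (x y z : 'I_(2 * N.+1)) : 1 < N -> pi x != pi y -> pi y != pi z -> pi x != pi z ->
  cc c x y != cc c y z -> cc c y z != cc c x z -> cc c x y != cc c x z ->
  ~~ cyc_adj x z -> ~~ cyc_adj y z ->
  GoalS c col [set cc c x y; cc c y z; cc c x z].
Proof.
case: (lift_pi x) => b1 ->; case: (lift_pi y) => b2 ->; case: (lift_pi z) => b3 ->.
rewrite !pi_lift; exact: Qlem.
Qed.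

Lemma memInv N K (c : colouring N.+1 K.+2)
  (hc : forall p q : 'I_N.+1, p != q -> (val (c p q) == K.+1) = cyc_adj p q)
  (hs : sym_col c) col
  (hcol : forall x y : 'I_N.+1, val y = ((val x).+2 %% N.+1) -> c x y = col)
  S : 1 < N -> S \in tri_sets (cc c) -> GoalS c col S.
Proof.
move=> N1 /triP [x [y [z [xy yz xz [h1 h2 h3] ->]]]].
have hs' := cc_sym hs.
have pxy : pi x != pi y by apply: (PD hc N1 h1 h2 h3).
have pyz : pi y != pi z.
  apply: (@PD N K c hc y z x N1); rewrite ?(hs' z x) ?(hs' y x) // eq_sym //.
have pxz : pi x != pi z.
  apply: (@PD N K c hc x z y N1); rewrite ?(hs' z y) // eq_sym //.
have exm : forall u v, cyc_adj u v -> cc c u v = ord_max by move=> u v h; rewrite /cc h.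
case Hxz: (cyc_adj x z).
  have nxy : ~~ cyc_adj x y.
    by apply/negP => /exm e; move: h3; rewrite e exm ?eqxx.
  have nyz : ~~ cyc_adj y z.
    by apply/negP => /exm e; move: h2; rewrite e exm ?eqxx.
  rewrite set3_12 set3_23 set3_12 -(hs' z y).
  apply: Qlem' => //; rewrite ?(hs' z y) ?(cyc_sym z y) // eq_sym //.
case Hyz: (cyc_adj y z).
  have nxy : ~~ cyc_adj x y.
    by apply/negP => /exm e; move: h1; rewrite e exm ?eqxx.
  rewrite set3_12 set3_23 -(hs' z x) -(hs' y x).
  apply: Qlem' => //; rewrite ?(hs' z x) ?(hs' y x) ?(cyc_sym z x) ?(cyc_sym y x) ?Hxz // eq_sym //.
by apply: Qlem' => //; rewrite ?Hxz ?Hyz.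
Qed.

Lemma conn_base m (e : rel 'I_m) (z : 'I_m) : symmetric e ->
  (forall x, connect e z x) -> forall x y, connect e x y.
Proof.
move=> hs h x y; apply: (connect_trans _ (h y)).
by rewrite (sym_connect_sym hs).
Qed.

Lemma conn_empty m (e : rel 'I_m) x y : (forall a b, ~~ e a b) -> connect e x y -> x = y.
Proof.
move=> h /connectP [[|a s]] //= /andP [hxa _]; by move: (h x a); rewrite hxa.
Qed.

Definition crel m k (c : colouring m k) (i : 'I_k) : rel 'I_m :=
  fun a b => (a != b) && (c a b == i).

Lemma crel_sym m k (c : colouring m k) i : sym_col c -> symmetric (crel c i).
Proof. by move=> hs a b; rewrite /crel eq_sym hs. Qed.

Lemma conn_top N K (c : colouring N.+1 K.+2) : 1 < N ->
  forall x, connect (crel (cc c) ord_max) (lift false ord0) x.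
Proof.
move=> N1 x.
have m1 : 1 < 2 * N.+1 by lia.
suff H : forall v (hv : v < 2 * N.+1), connect (crel (cc c) ord_max) (lift false ord0) (Ordinal hv).
  by have := H _ (ltn_ord x); congr connect; apply: ord_inj.
elim=> [|v IH] hv.
  by have -> : Ordinal hv = lift false ord0 by apply: ord_inj.
have hv' : v < 2 * N.+1 by lia.
apply: (connect_trans (IH hv')); apply: connect1.
rewrite /crel /cc; apply/andP; split.
  by rewrite -val_eqE /= neq_ltn ltnSn.
by rewrite ifT //; apply/cycP => //=; lia.
Qed.

Lemma conn_k N K (c : colouring N.+1 K.+2)
  (hc : forall p q : 'I_N.+1, p != q -> (val (c p q) == K.+1) = cyc_adj p q) : 1 < N ->
  forall x, connect (crel (cc c) (ew ord_max)) (lift false ord0) x.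
Proof.
move=> N1.
have m1 : 1 < 2 * N.+1 by lia.
have m0 : 1 < N.+1 by lia.
have e1 : forall p, crel (cc c) (ew ord_max) (lift false p) (lift true p).
  move=> p; rewrite /crel /cc; apply/andP; split.
    by rewrite -val_eqE /=; apply/eqP; lia.
  rewrite (negbTE (_ : ~~ cyc_adj _ _)); last first.
    by apply/negP; rewrite cycP //=; have := ltn_ord p; lia.
  by rewrite !pi_lift eqxx.
have e2 : forall p p' : 'I_N.+1, nat_of_ord p' = p.+1 ->
    crel (cc c) (ew ord_max) (lift true p) (lift false p').
  move=> p p' hp; rewrite /crel /cc; apply/andP; split.
    by rewrite -val_eqE /=; apply/eqP; lia.
  rewrite (negbTE (_ : ~~ cyc_adj _ _)); last first.
    by apply/negP; rewrite cycP //=; have := ltn_ord p; have := ltn_ord p'; lia.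
  have pp : p != p' by rewrite -val_eqE /=; apply/eqP; lia.
  rewrite !pi_lift (negbTE pp).
  have /eqP -> // : c p p' == ord_max.
  by rewrite (topE hc pp) cycP //; lia.
suff H : forall v (hv : v < N.+1), connect (crel (cc c) (ew ord_max)) (lift false ord0)
    (lift false (Ordinal hv)).
  move=> x; case: (lift_pi x) => b ->.
  have E : pi x = Ordinal (ltn_ord (pi x)) by apply: ord_inj.
  case: b; last by rewrite E; apply: H.
  apply: (connect_trans (H _ (ltn_ord (pi x)))); rewrite -E; exact: connect1.
elim=> [|v IH] hv.
  by have -> : Ordinal hv = ord0 by apply: ord_inj.
have hv' : v < N.+1 by lia.
apply: (connect_trans (IH hv')); apply: (connect_trans (connect1 (e1 _))).
by apply: connect1; apply: e2.
Qed.

Lemma conn_j N K (c : colouring N.+1 K.+2)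
  (hc : forall p q : 'I_N.+1, p != q -> (val (c p q) == K.+1) = cyc_adj p q)
  (hs : sym_col c) (hconn : connected_col c) j : 1 < N -> j != ord_max ->
  forall x, connect (crel (cc c) (ew j)) (lift false ord0) x.
Proof.
move=> N1 jm.
have edge : forall p r b b', crel c j p r -> crel (cc c) (ew j) (lift b p) (lift b' r).
  move=> p r b b' /andP [pr /eqP cpr]; apply/andP; split; first exact: lift_neq.
  have ncyc : ~~ cyc_adj p r by rewrite -(topE hc pr) cpr.
  by rewrite C2 // ?cpr // liftN.
have pth : forall s p, path (crel c j) p s ->
    connect (crel (cc c) (ew j)) (lift false p) (lift false (last p s)).
  elim=> [|r s IH] p //= /andP [hpr hs'].
  exact: (connect_trans (connect1 (edge _ _ false false hpr)) (IH _ hs')).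
have conn0 : forall q, connect (crel (cc c) (ew j)) (lift false ord0) (lift false q).
  move=> q; have /connectP [s hp ->] := hconn j ord0 q; exact: pth.
have L2 : forall p, connect (crel (cc c) (ew j)) (lift false p) (lift true p).
  move=> p.
  have [p' pp'] : exists p' : 'I_N.+1, p != p'.
    case: (eqVneq p ord0) => [->|h]; last by exists ord0.
    have l1 : 1 < N.+1 by lia.
    by exists (Ordinal l1).
  have /connectP [[|r s] /= hp hl] := hconn j p p'.
    by move: pp'; rewrite hl eqxx.
  move/andP: hp => [hpr _].
  apply: (connect_trans (connect1 (edge _ _ false false hpr))).
  apply: connect1; apply: edge; by rewrite /crel eq_sym hs.
move=> x; case: (lift_pi x) => b ->; case: b; last exact: conn0.
exact: (connect_trans (conn0 _) (L2 _)).
Qed.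

Lemma conn_cc N K (c : colouring N.+1 K.+2)
  (hc : forall p q : 'I_N.+1, p != q -> (val (c p q) == K.+1) = cyc_adj p q)
  (hs : sym_col c) (hconn : connected_col c) : 1 < N -> connected_col (cc c).
Proof.
move=> N1 i x y; change (connect (crel (cc c) i) x y).
apply: (conn_base (crel_sym _ (cc_sym hs))) => {x y} x.
case: (eqVneq i ord_max) => [->|ne]; first exact: conn_top.
have hi : i < K.+2.
  have := ltn_ord i; move: ne; rewrite -val_eqE /= => /eqP; lia.
have -> : i = ew (Ordinal hi) by apply: ord_inj.
case: (eqVneq (Ordinal hi) ord_max) => [->|ne']; first exact: conn_k.
exact: conn_j.
Qed.



Lemma next_enum M (x y : 'I_M) : (next (enum 'I_M) x == y) = (nat_of_ord y == x.+1 %% M).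
Proof.
have xin : x \in enum 'I_M by rewrite mem_enum.
rewrite next_nth xin index_enum_ord.
have hx := ltn_ord x.
have hsz := size_enum_ord M.
case E: (enum 'I_M) xin hsz => [|y0 s] // _ /= hsz.
have -> : nth y0 s x = nth y0 (enum 'I_M) x.+1 by rewrite E.
rewrite modS_case //; case: ifP => h.
  apply/eqP/eqP => [<-|hy]; first by rewrite nth_enum_ord.
  by apply: ord_inj; rewrite nth_enum_ord.
rewrite nth_default; last by rewrite size_enum_ord; lia.
have -> : y0 = nth y0 (enum 'I_M) 0 by rewrite E.
apply/eqP/eqP => [<-|hy]; first by rewrite nth_enum_ord //; lia.
by apply: ord_inj; rewrite nth_enum_ord //; lia.
Qed.

Lemma cycle_cc N K (c : colouring N.+1 K.+2) : 0 < N -> colour_is_cycle (cc c) K.+3.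
Proof.
move=> N0; exists (enum 'I_(2 * N.+1)); split.
- exact: enum_uniq.
- rewrite size_enum_ord; lia.
move=> x y xy; rewrite !mem_enum /= !next_enum.
have -> : (val (cc c x y) == K.+2) = (cc c x y == ord_max) by rewrite -val_eqE.
rewrite /cc; case: ifP => h; first by rewrite eqxx.
by case: ifP; rewrite ew_max.
Qed.

Lemma dist2_cc N K (c : colouring N.+1 K.+2) col
  (hcol : forall x y : 'I_N.+1, val y = ((val x).+2 %% N.+1) -> c x y = col) :
  2 < N -> dist2_const (cc c).
Proof.
move=> N2; exists (ew col) => x y.
case: (lift_pi x) => b ->; case: (lift_pi y) => b' ->.
move: (pi x) (pi y) => p q.
have m1 : 1 < 2 * N.+1 by lia.
have m0 : 1 < N.+1 by lia.
rewrite /= mod2_case //; last by have := ltn_ord p; case: (b); lia.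
have hp := ltn_ord p; have hq := ltn_ord q.
move=> E.
have A : nat_of_ord q = (nat_of_ord p).+2 %% N.+1.
  rewrite mod2_case //; move: E; case: b; case: b'; case: ifP; case: ifP => /=; lia.
have B : ~~ cyc_adj (lift b p) (lift b' q).
  apply/negP; rewrite cycP // !liftE; move: E; case: b; case: b'; case: ifP => /=; lia.
have C : p != q.
  rewrite -val_eqE /=; apply/eqP; move: A; rewrite mod2_case //; case: ifP; lia.
by rewrite C2 // hcol.
Qed.

Lemma hasc k (S : {set 'I_k.+1}) : has_colour S k.+1 = (ord_max \in S).
Proof.
apply/existsP/idP => [[a /andP [aS /eqP va]]|h].
  by have -> : ord_max = a by apply: ord_inj; rewrite va.
by exists ord_max; rewrite h /=.
Qed.

Lemma count_cc N K (c : colouring N.+1 K.+2)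
  (hc : forall p q : 'I_N.+1, p != q -> (val (c p q) == K.+1) = cyc_adj p q)
  (hs : sym_col c) col
  (hcol : forall x y : 'I_N.+1, val y = ((val x).+2 %% N.+1) -> c x y = col) l :
  2 < N -> #|tri_sets c| = l -> n_tri_with c K.+2 = K ->
  #|tri_sets (cc c)| = l + K.+1 /\ n_tri_with (cc c) K.+3 = K.+1.
Proof.
move=> N2 hl hK.
have N1 : 1 < N by lia.
set X := tri_sets (cc c).
set Tk := [set T in tri_sets c | ord_max \in T].
have hTk : #|Tk| = K.
  rewrite -[X in _ = X]hK /n_tri_with; apply: eq_card => S; by rewrite !inE hasc.
have inT : forall S, (S \in [set S : {set 'I_K.+3} | ord_max \in S]) = (ord_max \in S).
  by move=> S; rewrite inE.
have C1 : X :\: [set S : {set 'I_K.+3} | ord_max \in S] = [set [set ew j | j in T] | T : {set 'I_K.+2} in tri_sets c].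
  apply/setP => S; rewrite in_setD inT; apply/andP/imsetP.
    move=> [nS SX]; case: (memInv hc hs hcol N1 SX) => [[T TA ->]|[[T TA E]|E]].
    - by exists T.
    - exists T => //; rewrite E; apply: eq_in_imset => j jT; apply: hw_ew.
      apply: contra nS => /eqP jm; rewrite E; apply/imsetP; exists j => //.
      by rewrite jm hw_max.
    - by move: nS; rewrite E /Dset !inE eqxx.
  case=> T TA ->; split; last exact: memA.
  by apply/imsetP => [[j _ /esym /eqP]]; rewrite ew_max.
have C2 : X :&: [set S : {set 'I_K.+3} | ord_max \in S] = Dset col |: [set [set hw j | j in T] | T : {set 'I_K.+2} in Tk].
  apply/setP => S; rewrite in_setI inT in_setU1; apply/idP/idP.
    move/andP=> [SX mS]; case: (memInv hc hs hcol N1 SX) => [[T TA E]|[[T TA E]|E]].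
    - by move: mS; rewrite E => /imsetP [j _ /esym /eqP]; rewrite ew_max.
    - apply/orP; right; apply/imsetP; exists T => //.
      rewrite inE TA /=; move: mS; rewrite E => /imsetP [j jT ej].
      by have -> : ord_max = j by apply: (@hw_inj K); rewrite hw_max.
    - by rewrite E eqxx.
  case/orP => [/eqP ->|/imsetP [T]].
    by rewrite memD // /Dset !inE eqxx.
  rewrite inE => /andP [TA mT] ->; rewrite memB //=.
  by apply/imsetP; exists ord_max; rewrite ?hw_max.
have nD : Dset col \notin [set [set hw j | j in T] | T : {set 'I_K.+2} in Tk].
  apply/imsetP => [[T _ E]].
  have : ew ord_max \in Dset col by rewrite /Dset !inE eqxx orbT.
  rewrite E => /imsetP [j _ ej].
  case: (eqVneq j ord_max) => [jm|jm].
    by move: ej; rewrite jm hw_max => /eqP; rewrite ew_max.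
  by move: ej; rewrite hw_ew // => /ew_inj ej; move: jm; rewrite -ej eqxx.
have c1 : #|X :\: [set S : {set 'I_K.+3} | ord_max \in S]| = l.
  by rewrite C1 card_imset ?hl //; apply: imset_inj; apply: ew_inj.
have c2 : #|X :&: [set S : {set 'I_K.+3} | ord_max \in S]| = K.+1.
  rewrite C2 cardsU1 nD card_imset ?hTk //; apply: imset_inj; apply: hw_inj.
split.
  by rewrite -(cardsID [set S : {set 'I_K.+3} | ord_max \in S] X) c1 c2 addnC.
rewrite /n_tri_with -[X in _ = X]c2; apply: eq_card => S.
rewrite in_setI inT in_set hasc. done.
Qed.

Theorem lemma6 (k n l : nat) (c : colouring n k) :
  1 <= k -> 3 <= n ->
  sym_col c -> connected_col c ->
  #|tri_sets c| = l ->
  n_tri_with c k + 2 = k ->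
  (forall x y : 'I_n, x != y -> (val (c x y) == k.-1) = cyc_adj x y) ->
  dist2_const c ->
  exists c' : colouring (2 * n) k.+1,
    [/\ sym_col c' /\ connected_col c',
        #|tri_sets c'| = l + k - 1,
        n_tri_with c' k.+1 = k - 1,
        colour_is_cycle c' k.+1 &
        dist2_const c'].
Proof.
move=> k1 n3 hs hconn hl hk hc [col hcol].
move: c k1 hs hconn hl hk hc col hcol.
case: k => [|[|K]] c k1 hs hconn hl hk hc col hcol; try lia.
move: c k1 hs hconn hl hk hc col hcol.
case: n n3 => [|N] n3 c k1 hs hconn hl hk hc col hcol; first lia.
have N2 : 2 < N.
  case: (ltnP 2 N) => // hN.
  have N2 : N = 2 by lia.
  subst N.
  have l1 : 1 < 3 by [].
  have := hconn ord0 ord0 (Ordinal l1).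
  move/conn_empty => H.
  suff : (ord0 : 'I_3) = Ordinal l1 by [].
  apply: H => a b; apply/negP => /andP [ab /eqP cab].
  have := hc a b ab; rewrite cab /=.
  have -> : cyc_adj a b.
    have ab' : nat_of_ord a <> nat_of_ord b by move=> e; move/eqP: ab; apply; apply: ord_inj.
    apply/cycP => //; have := ltn_ord a; have := ltn_ord b; lia.
  by [].
have N1 : 1 < N by lia.
have hK : n_tri_with c K.+2 = K by lia.
have [c1 c2] := count_cc hc hs hcol N2 hl hK.
exists (cc c); split.
- split; [exact: cc_sym | exact: conn_cc].
- by rewrite c1; lia.
- by rewrite c2; lia.
- by apply: cycle_cc; lia.
- exact: dist2_cc hcol N2.
Qed.
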